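(* Let $\Lambda=(V,\pi,v,\le)$ be a bi-colored weighted ordered vertex with $r(\Lambda)=2$ and $|V_\bullet|=2$, identify $V=\{1,\dots,l\}$ via $\le$, and suppose $s(\Lambda)\ne0$. Then $l\ge3$ and: (1) if $V_\bullet=\{1,2\}$, then $s(\Lambda)=(-1)^{l-1}$; (2) if $V_\bullet=\{1,a\}$ with $a\ge3$, then $v(2)+\dots+v(a-2)<v(a-1)+v(a+1)+\dots+v(l)$, $v(2)+\dots+v(a-1)\ge v(a+1)+\dots+v(l)$, and $s(\Lambda)=(-1)^l$; (3) if $V_\bullet=\{2,3\}$, then $v(1)<v(4)+\dots+v(l)$ and $s(\Lambda)=(-1)^l$; (4) if $V_\bullet=\{2,a\}$ with $a\ge4$, then $v(1)+v(3)+\dots+v(a-2)<v(a-1)+v(a+1)+\dots+v(l)$, $v(1)+v(3)+\dots+v(a-1)\ge v(a+1)+\dots+v(l)$, and $s(\Lambda)=(-1)^{l-1}$.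
   Context: A bi-colored weighted ordered vertex is $\Lambda=(V,\pi,v,\le)$ with $V$ a finite set, $\pi\colon V\to\{\bullet,\circ\}$, $v\colon V\to\mathbb{Z}_{\ge1}$, $\le$ a total order on $V$. Put $V_\bullet=\pi^{-1}(\bullet)$, $V_\circ=\pi^{-1}(\circ)$, $r(\Lambda)=\sum_{i\in V_\bullet}v(i)$; $v_i=(v(i),0)$ if $i\in V_\bullet$, $v_i=(0,v(i))$ if $i\in V_\circ$. For $(r,n)\in\mathbb{Z}_{\ge0}^2\setminus\{0\}$ let $\mu(r,n)=n/r\in\mathbb{Q}\cup\{\infty\}$ ($\infty$ if $r=0$). For vectors $w_1,\dots,w_l$ define $s_l(w_1,\dots,w_l)=(-1)^k$ if for each $i=1,\dots,l-1$ either (a) $\mu(w_i)>\mu(w_{i+1})$ and $\mu(w_1+\dots+w_i)\ge\mu(w_{i+1}+\dots+w_l)$, or (b) $\mu(w_i)\le\mu(w_{i+1})$ and $\mu(w_1+\dots+w_i)<\mu(w_{i+1}+\dots+w_l)$, where $k$ is the number of $i$ satisfying (b); otherwise $s_l=0$. Set $s(\Lambda)=s_l(v_1,\dots,v_l)$, $l=|V|$. Empty sums are $0$. *)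

(* Defs.v *)
From HB Require Import structures.
From mathcomp Require Import all_boot all_order all_algebra.
Set Implicit Arguments. Unset Strict Implicit. Unset Printing Implicit Defensive.
Import Order.TTheory GRing.Theory Num.Theory.
Local Open Scope ring_scope.

Inductive color := Black | White.
Definition is_black (c : color) : bool := if c is Black then true else false.

(* slope mu(r,n) = n/r in Q \cup {oo}; None encodes oo (r = 0). *)
Definition mu (w : nat * nat) : option rat :=
  if w.1 == 0%N then None else Some (w.2%:R / w.1%:R).

Definition mu_lt (x y : option rat) : bool :=
  match x, y with
  | Some a, Some b => a < b
  | Some _, None => true
  | None, _ => false
  end.
Definition mu_le (x y : option rat) : bool := ~~ mu_lt y x.

Definition vsum (s : seq (nat * nat)) : nat * nat :=
  (sumn (map fst s), sumn (map snd s)).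

(* s_l(w_1,...,w_l), with the list 0-indexed: index i (0 <= i < l-1) of
   the list corresponds to index i+1 of the paper. *)
Definition condA (ws : seq (nat * nat)) (i : nat) : bool :=
  mu_lt (mu (nth (0,0)%N ws i.+1)) (mu (nth (0,0)%N ws i)) &&
  mu_le (mu (vsum (drop i.+1 ws))) (mu (vsum (take i.+1 ws))).
Definition condB (ws : seq (nat * nat)) (i : nat) : bool :=
  mu_le (mu (nth (0,0)%N ws i)) (mu (nth (0,0)%N ws i.+1)) &&
  mu_lt (mu (vsum (take i.+1 ws))) (mu (vsum (drop i.+1 ws))).

Definition s_l (ws : seq (nat * nat)) : int :=
  let I := iota 0 (size ws).-1 in
  if all (fun i => condA ws i || condB ws i) I
  then (-1) ^+ (count (condB ws) I) else 0.

(* A bi-colored weighted ordered vertex with V identified with {1,...,l}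
   via the order: colours pi i and weights v i for 1 <= i <= l. *)
Definition vecv (pi : nat -> color) (v : nat -> nat) (i : nat) : nat * nat :=
  if is_black (pi i) then (v i, 0%N) else (0%N, v i).

Definition sLam (l : nat) (pi : nat -> color) (v : nat -> nat) : int :=
  s_l [seq vecv pi v i | i <- iota 1 l].

Definition Vb (l : nat) (pi : nat -> color) : seq nat :=
  [seq i <- iota 1 l | is_black (pi i)].

Definition rLam (l : nat) (pi : nat -> color) (v : nat -> nat) : nat :=
  (\sum_(1 <= i < l.+1 | is_black (pi i)) v i)%N.

(* Main.v *)
Require Import Defs.
From HB Require Import structures.
From mathcomp Require Import all_boot all_order all_algebra.
From mathcomp Require Import zify.
Import Order.TTheory GRing.Theory Num.Theory.
Local Open Scope ring_scope.
Local Open Scope nat_scope.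

Definition bl (pi : nat -> color) (v : nat -> nat) (j : nat) : nat :=
  if is_black (pi j) then v j else 0%N.
Definition wt (pi : nat -> color) (v : nat -> nat) (j : nat) : nat :=
  if is_black (pi j) then 0%N else v j.

Lemma vsum_map pi v s : vsum [seq vecv pi v i | i <- s] =
  (\sum_(j <- s) bl pi v j, \sum_(j <- s) wt pi v j)%N.
Proof.
elim: s => [|x s IH]; first by rewrite !big_nil.
move: IH; rewrite !big_cons /vsum /= => -[<- <-].
by rewrite /vecv /bl /wt; case: (is_black (pi x)).
Qed.

Lemma sum_eqp m n p : (\sum_(m <= j < n) (j == p : nat))%N = nat_of_bool ((m <= p) && (p < n))%N.
Proof.
elim: n => [|n IH]; first by rewrite big_geq // ltn0 andbF.
case: (leqP m n) => hmn; last first.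
  rewrite big_geq //; case: (leqP m p) => //= hmp; lia.
rewrite big_nat_recr //= IH ltnS (leq_eqVlt p n) (eq_sym n p).
case: eqP => [->|hne] /=; first by rewrite ltnn hmn.

by rewrite addn0.
Qed.

Lemma boundary l pi v i (hv : forall j, 1 <= j <= l -> 0 < v j) (hi : i.+1 < l) :
  let ws := [seq vecv pi v j | j <- iota 1 l] in
  let fl := is_black (pi i.+2) && ~~ is_black (pi i.+1) in
  let P := (\sum_(1 <= j < i.+2) bl pi v j, \sum_(1 <= j < i.+2) wt pi v j) in
  let S := (\sum_(i.+2 <= j < l.+1) bl pi v j, \sum_(i.+2 <= j < l.+1) wt pi v j) in
  condA ws i = fl && mu_le (mu S) (mu P) /\ condB ws i = ~~ fl && mu_lt (mu P) (mu S).
Proof.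
move=> ws fl P S.
have hn : forall k, k < l -> nth (0,0)%N ws k = vecv pi v k.+1.
  move=> k hk; rewrite /ws (nth_map 0%N) ?size_iota // nth_iota //.
have hT : vsum (take i.+1 ws) = P.
  rewrite /ws -map_take take_iota vsum_map /P /index_iota subSS subn0.
  by have -> : minn i.+1 l = i.+1 by lia.
have hD : vsum (drop i.+1 ws) = S.
  by rewrite /ws -map_drop drop_iota vsum_map /S /index_iota subSS add1n.
have hf : mu_lt (mu (nth (0,0)%N ws i.+1)) (mu (nth (0,0)%N ws i)) = fl.
  rewrite !hn //; last by lia.
  have nz1 : (v i.+1 == 0) = false by apply/negbTE; rewrite -lt0n; apply: hv; lia.
  have nz2 : (v i.+2 == 0) = false by apply/negbTE; rewrite -lt0n; apply: hv; lia.
  rewrite /fl /vecv /mu.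
  case: (is_black (pi i.+2)); case: (is_black (pi i.+1)) => //=; rewrite ?nz1 ?nz2 //.
  by rewrite /mu_lt !mul0r Order.POrderTheory.ltxx.
rewrite /condA /condB hT hD hf /mu_le hf; split => //.
Qed.

Lemma vb_facts l pi p q : Vb l pi = [:: p; q] ->
  [/\ 1 <= p, p < q, q <= l &
      forall j, 1 <= j <= l -> is_black (pi j) = (j == p) || (j == q)].
Proof.
move=> E.
have hmem : forall j, (j \in [:: p; q]) = is_black (pi j) && (j \in iota 1 l).
  by move=> j; rewrite -E /Vb mem_filter.
have hs : sorted ltn (Vb l pi) by apply: sorted_filter; [exact: ltn_trans | exact: iota_ltn_sorted].
rewrite E /= andbT in hs.
have := hmem p; rewrite inE eqxx /= mem_iota => /esym/andP[_ hp].
have := hmem q; rewrite !inE eqxx orbT /= mem_iota => /esym/andP[_ hq].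
split; [lia | exact: hs | lia |].
move=> j hj; have := hmem j; rewrite !inE mem_iota.
have -> : (1 <= j < 1 + l) by lia.
by rewrite andbT => ->.
Qed.

Lemma rLam_vb l pi v p q : Vb l pi = [:: p; q] -> rLam l pi v = v p + v q.
Proof.
move=> E; rewrite /rLam /index_iota subSS subn0 -big_filter.
by rewrite -/(Vb l pi) E big_cons big_cons big_nil addn0.
Qed.

Lemma mu1 a : mu (1%N, a) = Some (a%:R).
Proof. by rewrite /mu /= divr1. Qed.

Lemma mu_lt1 a b : mu_lt (mu (1%N, a)) (mu (1%N, b)) = (a < b).
Proof. by rewrite !mu1 /= ltr_nat. Qed.

Lemma mu_le1 a b : mu_le (mu (1%N, a)) (mu (1%N, b)) = (a <= b).
Proof. by rewrite /mu_le mu_lt1 -leqNgt. Qed.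

Lemma cnt1 m n c : m <= c < m + n ->
  count (fun i => ~~ (i == c)) (iota m n) = n.-1.
Proof.
move=> hc; have := count_predC (pred1 c) (iota m n).
rewrite size_iota (count_uniq_mem _ (iota_uniq m n)) mem_iota hc /=.
have -> : count (predC (pred1 c)) (iota m n) = count (fun i => ~~ (i == c)) (iota m n) by [].
lia.
Qed.

Lemma cnt0 m n : count (fun i => ~~ (i == 0)) (iota m.+1 n) = n.
Proof.
rewrite (eq_in_count (a2 := predT)) ?count_predT ?size_iota //.
by move=> i; rewrite mem_iota /=; case: i.
Qed.

Lemma sign2 n : (-1) ^+ n.+2 = (-1) ^+ n :> int.
Proof. by rewrite !GRing.exprS GRing.mulN1r GRing.mulN1r GRing.opprK. Qed.

Local Open Scope ring_scope.

Theorem lemma4p10 (l : nat) (pi : nat -> color) (v : nat -> nat)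
  (hv : forall i : nat, (1 <= i <= l)%N -> (0 < v i)%N)
  (hr : rLam l pi v = 2%N)
  (hcard : size (Vb l pi) = 2%N)
  (hs : sLam l pi v != 0) :
  (3 <= l)%N /\
  (Vb l pi = [:: 1%N; 2%N] -> sLam l pi v = (-1) ^+ (l - 1)) /\
  (forall a : nat, (3 <= a)%N -> Vb l pi = [:: 1%N; a] ->
     [/\ (\sum_(2 <= i < a - 1) v i < v (a - 1) + \sum_(a.+1 <= i < l.+1) v i)%N,
         (\sum_(a.+1 <= i < l.+1) v i <= \sum_(2 <= i < a) v i)%N
       & sLam l pi v = (-1) ^+ l]) /\
  (Vb l pi = [:: 2%N; 3%N] ->
     (v 1 < \sum_(4 <= i < l.+1) v i)%N /\ sLam l pi v = (-1) ^+ l) /\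
  (forall a : nat, (4 <= a)%N -> Vb l pi = [:: 2%N; a] ->
     [/\ (\sum_(1 <= i < a - 1 | i != 2%N) v i
            < v (a - 1) + \sum_(a.+1 <= i < l.+1) v i)%N,
         (\sum_(a.+1 <= i < l.+1) v i <= \sum_(1 <= i < a | i != 2%N) v i)%N
       & sLam l pi v = (-1) ^+ (l - 1)]).
Proof.
Local Open Scope nat_scope.
set ws := [seq vecv pi v j | j <- iota 1 l].
have hsz : size ws = l by rewrite size_map size_iota.
have hall : all (fun i => condA ws i || condB ws i) (iota 0 l.-1).
  by move: hs; rewrite /sLam /s_l -/ws hsz; case: ifP => //; rewrite eqxx.
have hsL : sLam l pi v = (-1) ^+ count (condB ws) (iota 0 l.-1).
  by rewrite /sLam /s_l -/ws hsz hall.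
rewrite hsL; clear hs hsL.
case E: (Vb l pi) hcard => [|p [|q [|]]] // _.
have [hp hpq hql hblk] := @vb_facts _ _ _ _ E.
have hvpq : v p + v q = 2 by rewrite -(@rLam_vb _ _ v _ _ E).
have hvp0 : 0 < v p by apply: hv; lia.
have hvq0 : 0 < v q by apply: hv; lia.
have hvp : v p = 1 by lia.
have hvq : v q = 1 by lia.
pose fl i := is_black (pi i.+2) && ~~ is_black (pi i.+1).
have hab : forall i, i < l.-1 -> (condA ws i -> fl i) /\ (condB ws i -> ~~ fl i).
  move=> i hi; have hil : i.+1 < l by lia.
  have [-> ->] := @boundary _ pi _ i hv hil.
  by split; case/andP.
have hcb : forall i, i < l.-1 -> condB ws i = ~~ fl i.
  move=> i hi; have [hA hB] := hab i hi.
  have := allP hall i; rewrite mem_iota /= => /(_ hi).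
  move=> H; case hb: (condB ws i); first by rewrite (hB hb).
  by rewrite hb orbF in H; rewrite (hA H).
have hbl : forall m n, 1 <= m -> n <= l.+1 ->
    \sum_(m <= j < n) bl pi v j = (m <= p < n) + (m <= q < n).
  move=> m n hm hn; rewrite -!sum_eqp -big_split /=.
  apply: eq_big_nat => j hj; rewrite /bl hblk; last by lia.
  case: (eqVneq j p) => [->|hjp]; first by rewrite (ltn_eqF hpq) hvp.
  by case: (eqVneq j q) => [->|hjq]; rewrite ?hvq.
have hwt : forall j, 1 <= j <= l -> wt pi v j = if (j == p) || (j == q) then 0 else v j.
  by move=> j hj; rewrite /wt hblk.
have hmid : forall i, p <= i.+1 < q ->
   (fl i -> \sum_(i.+2 <= j < l.+1) wt pi v j <= \sum_(1 <= j < i.+2) wt pi v j) /\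
   (~~ fl i -> \sum_(1 <= j < i.+2) wt pi v j < \sum_(i.+2 <= j < l.+1) wt pi v j).
  move=> i hi; have hil : i.+1 < l by lia.
  have [hA hB] := @boundary _ pi _ i hv hil.
  have := allP hall i; rewrite mem_iota /= => /(_ (ltac:(lia))).
  rewrite hA hB (hbl 1 i.+2) ?(hbl i.+2 l.+1) //; try lia.
  have -> : (1 <= p < i.+2) + (1 <= q < i.+2) = 1 by lia.
  have -> : (i.+2 <= p < l.+1) + (i.+2 <= q < l.+1) = 1 by lia.
  rewrite mu_le1 mu_lt1.
  rewrite /fl; case: (is_black (pi i.+2) && ~~ is_black (pi i.+1)) => /=;
  by rewrite ?orbF => H; split.
have hfl : forall i, i < l.-1 -> fl i = ((i.+2 == p) || (i.+2 == q)) && ~~ ((i.+1 == p) || (i.+1 == q)).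
  by move=> i hi; rewrite /fl !hblk //; lia.
have hcnt : count (condB ws) (iota 0 l.-1) = count (fun i => ~~ fl i) (iota 0 l.-1).
  by apply: eq_in_count => i; rewrite mem_iota => /andP[_ hi]; apply: hcb.
rewrite hcnt.
have hw0p : wt pi v p = 0 by rewrite hwt ?eqxx //; lia.
have hw0q : wt pi v q = 0 by rewrite hwt ?eqxx ?orbT //; lia.
have hwv : forall j, 1 <= j <= l -> j != p -> j != q -> wt pi v j = v j.
  by move=> j hj h1 h2; rewrite hwt // (negbTE h1) (negbTE h2).
have hsw : forall m n, 1 <= m -> n <= l.+1 ->
    (forall j, m <= j < n -> (j != p) && (j != q)) ->
    \sum_(m <= j < n) wt pi v j = \sum_(m <= j < n) v j.
  move=> m n hm hn H; apply: eq_big_nat => j hj.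
  by have /andP[h1 h2] := H j hj; rewrite hwv //; lia.
have hl3 : 3 <= l.
  case: (leqP 3 l) => // hl.
  have hp1 : p = 1 by lia.
  have hq2 : q = 2 by lia.
  have hl2 : l = 2 by lia.
  have [_ H] := hmid 0 (ltac:(lia)).
  have hf0 : fl 0 = false by rewrite hfl; lia.
  rewrite hf0 in H; have := H isT.
  subst p q; rewrite hl2 !big_nat1 hw0p hw0q.
  by [].
split; first exact: hl3.
split.
  case=> hp1 hq2; subst p q.
  rewrite (eq_in_count (a2 := predT)) ?count_predT ?size_iota ?subn1 //.
  by move=> i; rewrite mem_iota => /andP[_ hi]; rewrite /= hfl //; lia.
split.
  move=> a ha; case=> hp1 hqa; subst p q.
  have e1 : \sum_(1 <= j < a - 1) wt pi v j = \sum_(2 <= j < a - 1) v j.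
    rewrite big_ltn; last by lia.
    by rewrite hw0p add0n; apply: hsw => //; lia.
  have e3 : \sum_(1 <= j < a) wt pi v j = \sum_(2 <= j < a) v j.
    rewrite big_ltn; last by lia.
    by rewrite hw0p add0n; apply: hsw => //; lia.
  have e4 : \sum_(a <= j < l.+1) wt pi v j = \sum_(a.+1 <= j < l.+1) v j.
    rewrite big_ltn; last by lia.
    by rewrite hw0q add0n; apply: hsw => //; lia.
  have e2 : \sum_(a - 1 <= j < l.+1) wt pi v j = v (a - 1) + \sum_(a.+1 <= j < l.+1) v j.
    rewrite big_ltn; last by lia.
    have -> : (a - 1).+1 = a by lia.
    rewrite e4 hwv //; lia.
  split.
  - have [_ H] := hmid (a - 3) (ltac:(lia)).
    have hf : fl (a - 3) = false by rewrite hfl; lia.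
    rewrite hf in H; have := H isT.
    have -> : (a - 3).+2 = a - 1 by lia.
    by rewrite e1 e2.
  - have [H _] := hmid (a - 2) (ltac:(lia)).
    have hf : fl (a - 2) = true by rewrite hfl; lia.
    rewrite hf in H; have := H isT.
    have -> : (a - 2).+2 = a by lia.
    by rewrite e3 e4.
  - rewrite (eq_in_count (a2 := fun i => ~~ (i == a - 2))); last first.
      by move=> i; rewrite mem_iota => /andP[_ hi]; rewrite hfl //; lia.
    rewrite (@cnt1 0 l.-1 (a - 2)); last by lia.
    have -> : l = (l.-1.-1).+2 by lia.
    by rewrite sign2.
split.
  case=> hp2 hq3; subst p q.
  split.
  - have [_ H] := hmid 1 (ltac:(lia)).
    have hf : fl 1 = false by rewrite hfl; lia.
    rewrite hf in H; have := H isT.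
    have hw1 : wt pi v 1 = v 1 by rewrite hwv //; lia.
    rewrite big_ltn // big_nat1 hw0p addn0 hw1.
    rewrite big_ltn; last by lia.
    by rewrite hw0q add0n hsw //; lia.
  - rewrite (eq_in_count (a2 := fun i => ~~ (i == 0))); last first.
      by move=> i; rewrite mem_iota => /andP[_ hi]; rewrite hfl //; lia.
    rewrite (@cnt1 0 l.-1 0); last by lia.
    have -> : l = (l.-1.-1).+2 by lia.
    by rewrite sign2.
move=> a ha; case=> hp2 hqa; subst p q.
have hw : forall j, 1 <= j < a -> wt pi v j = if j != 2 then v j else 0.
  move=> j hj; rewrite hwt; last by lia.
  have -> : (j == a) = false by lia.
  by rewrite orbF; case: (j == 2).
have e1 : \sum_(1 <= j < a - 1) wt pi v j = \sum_(1 <= j < a - 1 | j != 2) v j.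
  by rewrite [RHS]big_mkcond; apply: eq_big_nat => j hj; apply: hw; lia.
have e3 : \sum_(1 <= j < a) wt pi v j = \sum_(1 <= j < a | j != 2) v j.
  by rewrite [RHS]big_mkcond; apply: eq_big_nat => j hj; apply: hw; lia.
have e4 : \sum_(a <= j < l.+1) wt pi v j = \sum_(a.+1 <= j < l.+1) v j.
  rewrite big_ltn; last by lia.
  by rewrite hw0q add0n; apply: hsw => //; lia.
have e2 : \sum_(a - 1 <= j < l.+1) wt pi v j = v (a - 1) + \sum_(a.+1 <= j < l.+1) v j.
  rewrite big_ltn; last by lia.
  have -> : (a - 1).+1 = a by lia.
  rewrite e4 hwv //; lia.
split.
- have [_ H] := hmid (a - 3) (ltac:(lia)).
  have hf : fl (a - 3) = false by rewrite hfl; lia.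
  rewrite hf in H; have := H isT.
  have -> : (a - 3).+2 = a - 1 by lia.
  by rewrite e1 e2.
- have [H _] := hmid (a - 2) (ltac:(lia)).
  have hf : fl (a - 2) = true by rewrite hfl; lia.
  rewrite hf in H; have := H isT.
  have -> : (a - 2).+2 = a by lia.
  by rewrite e3 e4.
- rewrite (eq_in_count (a2 := fun i => ~~ ((i == 0) || (i == a - 2)))); last first.
    by move=> i; rewrite mem_iota => /andP[_ hi]; rewrite hfl //; lia.
  have -> : l.-1 = (l.-2).+1 by lia.
  rewrite /= (eq_in_count (a2 := fun i => ~~ (i == a - 2))); last first.
    by move=> i; rewrite mem_iota => /andP[hi _]; lia.
  rewrite (@cnt1 1 l.-2 (a - 2)); last by lia.
  have -> : l - 1 = (l.-2.-1).+2 by lia.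
  by rewrite sign2.
Qed.
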